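(* Let $k$ be a field, $X,Y$ indeterminates, $M=Yk(X)[[Y]]$ and $R=k+M$. Then $R$ is integrally closed, but $R$ does not have the finite $t$-basic ideal property: for the finitely generated ideal $I=Y(k+kX+M)=(Y,XY)R$ and $J=YR\subseteq I$, one has $(JI)_t=(I^2)_t$ while $J_t=YR\ne M=I_t$.
   Context: For a domain $R$ with quotient field $K$ and nonzero fractional ideal $I$: $I^{-1}=(R:I)=\{x\in K:xI\subseteq R\}$, $I_v=(I^{-1})^{-1}$, $I_t=\bigcup J_v$ over finitely generated subideals $J\subseteq I$. For a nonzero ideal $I$, an ideal $J\subseteq I$ is a $t$-reduction of $I$ if $(JI^n)_t=(I^{n+1})_t$ for some integer $n\ge0$; $I$ is $t$-basic if every $t$-reduction $J$ of $I$ satisfies $J_t=I_t$. The finite $t$-basic ideal property means every nonzero finitely generated ideal is $t$-basic. *)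

(* Defs.v *)
From HB Require Import structures.
From mathcomp Require Import all_boot all_order all_algebra.
From mathcomp Require Import fraction.
From Stdlib Require List.

Set Implicit Arguments. Unset Strict Implicit. Unset Printing Implicit Defensive.
Import GRing.Theory.
Local Open Scope ring_scope.

(* Generic part: an ambient "field" K (only its operations are used)   *)
Record rawRing := RawRing {
  rcarrier :> Type;
  radd : rcarrier -> rcarrier -> rcarrier;
  rmul : rcarrier -> rcarrier -> rcarrier;
  rzero : rcarrier;
  rone : rcarrier }.

Section StarOps.
Variables (K : rawRing) (R : K -> Prop).

Definition subsetK (A B : K -> Prop) := forall x, A x -> B x.
Definition eqsetK (A B : K -> Prop) := forall x, A x <-> B x.

Definition is_ideal (I : K -> Prop) :=
  [/\ subsetK I R, I (rzero K),
      (forall x y, I x -> I y -> I (radd x y)) &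
      (forall r x, R r -> I x -> I (rmul r x))].

Definition nonzero_set (I : K -> Prop) := exists x, I x /\ x <> rzero K.

Fixpoint Rspan (s : list K) (x : K) : Prop :=
  match s with
  | nil => x = rzero K
  | a :: s' => exists r y, R r /\ Rspan s' y /\ x = radd (rmul r a) y
  end.

Definition fingen (J : K -> Prop) := exists s : list K, eqsetK J (Rspan s).

Definition colon (I : K -> Prop) : K -> Prop :=
  fun x => forall i, I i -> R (rmul x i).
Definition inv_ideal (I : K -> Prop) := colon I.
Definition vcl (I : K -> Prop) : K -> Prop := colon (colon I).
Definition tcl (I : K -> Prop) : K -> Prop :=
  fun x => exists J, [/\ fingen J, subsetK J I & vcl J x].

Inductive fsum (P : K -> Prop) : K -> Prop :=
  | fsum0 : fsum P (rzero K)
  | fsumS a y : P a -> fsum P y -> fsum P (radd a y).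

Definition prodI (I J : K -> Prop) : K -> Prop :=
  fsum (fun z => exists a b, [/\ I a, J b & z = rmul a b]).

Fixpoint powI (I : K -> Prop) (n : nat) : K -> Prop :=
  match n with
  | O => R
  | S n' => prodI (powI I n') I
  end.

Definition t_reduction (J I : K -> Prop) :=
  is_ideal J /\ subsetK J I /\
  exists n : nat, eqsetK (tcl (prodI J (powI I n))) (tcl (powI I n.+1)).

Definition t_basic (I : K -> Prop) :=
  forall J, t_reduction J I -> eqsetK (tcl J) (tcl I).

Definition finite_t_basic_property :=
  forall I, is_ideal I -> nonzero_set I -> fingen I -> t_basic I.

(* value at x of the monic polynomial X^n + c_{n-1} X^{n-1} + ... + c_0,
   where cs = [c_0; ...; c_{n-1}] (Horner scheme) *)
Definition monic_eval (cs : list K) (x : K) : K :=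
  foldr (fun c acc => radd c (rmul x acc)) (rone K) cs.

Definition integral_over (x : K) :=
  exists cs : list K, (forall c, List.In c cs -> R c) /\ monic_eval cs x = rzero K.

Definition integrally_closed := forall x : K, integral_over x -> R x.

End StarOps.

Section Series.
Variable F : fieldType.

Definition ps := nat -> F.
Definition ps_add (a b : ps) : ps := fun n => a n + b n.
Definition ps_mul (a b : ps) : ps :=
  fun n => \sum_(i < n.+1) a i * b (n - i)%N.
Definition ps_shift (a : ps) : ps := fun n => a n.+1.           (* a / Y, when a 0 = 0 *)
Definition ps_Ypow (m : nat) (a : ps) : ps :=
  fun n => if (m <= n)%N then a (n - m)%N else 0.
Definition ps_const (c : F) : ps := fun n => if n == 0%N then c else 0.

(* Laurent series a / Y^n, in normal form: n = 0 or a(0) <> 0 *)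
Record laur := Laur {
  lden : nat;
  lnum : ps;
  lnormal : (lden == 0%N) || (lnum 0%N != 0) }.

Fixpoint normp (n : nat) (a : ps) : nat * ps :=
  match n with
  | O => (O, a)
  | S n' => if a 0%N == 0 then normp n' (ps_shift a) else (S n', a)
  end.

Lemma normp_ok n a : ((normp n a).1 == 0%N) || ((normp n a).2 0%N != 0).
Proof.
elim: n a => [|n IH] a //=.
by case: ifP => [_|->]; [apply: IH | rewrite orbT].
Qed.

Definition mkL (n : nat) (a : ps) : laur := Laur (normp_ok n a).

Definition laur_add (x y : laur) : laur :=
  mkL (lden x + lden y) (ps_add (ps_Ypow (lden y) (lnum x)) (ps_Ypow (lden x) (lnum y))).
Definition laur_mul (x y : laur) : laur :=
  mkL (lden x + lden y) (ps_mul (lnum x) (lnum y)).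
Definition of_ps (a : ps) : laur := mkL 0 a.
Definition laur0 : laur := of_ps (ps_const 0).
Definition laur1 : laur := of_ps (ps_const 1).

Definition LaurRing : rawRing := RawRing laur_add laur_mul laur0 laur1.

Definition laurC (c : F) : laur := of_ps (ps_const c).
Definition laurY : laur := of_ps (fun n => if n == 1%N then 1 else 0).

Definition in_ps (x : laur) := lden x = 0%N.
Definition in_YPS (x : laur) := lden x = 0%N /\ lnum x 0%N = 0.
End Series.

Unset Implicit Arguments.
Definition ratfun (k : fieldType) := {fraction {poly k}}.
Definition rfC (k : fieldType) (c : k) : ratfun k := @FracField.tofrac _ (c%:P).
Definition rfX (k : fieldType) : ratfun k := @FracField.tofrac _ 'X.

Definition KK (k : fieldType) : rawRing := LaurRing (ratfun k).

Definition MM (k : fieldType) : KK k -> Prop := @in_YPS (ratfun k).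

Definition RR (k : fieldType) : KK k -> Prop :=
  fun x => lden x = 0%N /\ exists c : k, lnum x 0%N = rfC k c.

Definition YY (k : fieldType) : KK k := laurY (ratfun k).
Definition XX (k : fieldType) : KK k := laurC (rfX k).
Definition cK (k : fieldType) (c : k) : KK k := laurC (rfC k c).

Definition II (k : fieldType) : KK k -> Prop :=
  fun z => exists (a b : k) (m : KK k), MM k m /\
    z = laur_mul (YY k) (laur_add (laur_add (cK k a) (laur_mul (cK k b) (XX k))) m).

Definition JJ (k : fieldType) : KK k -> Prop :=
  fun z => exists r, RR k r /\ z = laur_mul (YY k) r.

(* Main.v *)
From HB Require Import structures.
Require Import Defs.
From mathcomp Require Import all_boot all_order all_algebra.
From mathcomp Require Import fraction generic_quotient.
From mathcomp Require Import boolp.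
From mathcomp Require Import ring zify.
Set Implicit Arguments. Unset Strict Implicit. Unset Printing Implicit Defensive.
Import GRing.Theory.
Local Open Scope ring_scope.

Section PS.
Variable F : fieldType.
Local Notation ps := (ps F).

Lemma ps_ext (a b : ps) : (forall n, a n = b n) -> a = b.
Proof. by move=> h; apply: funext. Qed.

Definition tr n (a : ps) : {poly F} := \poly_(i < n.+1) a i.
Definition agree n (P : {poly F}) (a : ps) := forall m, (m <= n)%N -> P`_m = a m.

Lemma agree_tr n a : agree n (tr n a) a.
Proof. by move=> m hm; rewrite coef_poly ltnS hm. Qed.

Lemma agree_mul n P Q a b : agree n P a -> agree n Q b -> agree n (P * Q) (ps_mul a b).
Proof.
move=> hP hQ m hm; rewrite coefM /ps_mul; apply: eq_bigr => i _.
have hi : (i <= n)%N by rewrite (leq_trans _ hm) // -ltnS.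
by rewrite hP // hQ // (leq_trans (leq_subr _ _) hm).
Qed.

Lemma agree_add n P Q a b : agree n P a -> agree n Q b -> agree n (P + Q) (ps_add a b).
Proof. by move=> hP hQ m hm; rewrite coefD hP // hQ. Qed.

Lemma agree_eq n P a b : agree n P a -> agree n P b -> a n = b n.
Proof. by move=> ha hb; rewrite -ha // hb. Qed.

Definition ps0 : ps := fun _ => 0.
Definition ps_opp (a : ps) : ps := fun n => - a n.

Lemma agree_opp n P a : agree n P a -> agree n (- P) (ps_opp a).
Proof. by move=> hP m hm; rewrite coefN hP. Qed.
Lemma agree_C n c : agree n c%:P (ps_const c).
Proof. by move=> m _; rewrite coefC /ps_const. Qed.
Lemma agree_0 n : agree n 0 ps0.
Proof. by move=> m _; rewrite coef0. Qed.

Lemma ps_addA : associative (@ps_add F).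
Proof. by move=> a b c; apply: ps_ext => n; rewrite /ps_add addrA. Qed.
Lemma ps_addC : commutative (@ps_add F).
Proof. by move=> a b; apply: ps_ext => n; rewrite /ps_add addrC. Qed.
Lemma ps_add0 : left_id ps0 (@ps_add F).
Proof. by move=> a; apply: ps_ext => n; rewrite /ps_add add0r. Qed.
Lemma ps_addN : left_inverse ps0 ps_opp (@ps_add F).
Proof. by move=> a; apply: ps_ext => n; rewrite /ps_add addNr. Qed.

HB.instance Definition _ := gen_eqMixin ps.
HB.instance Definition _ := gen_choiceMixin ps.
HB.instance Definition _ := GRing.isZmodule.Build ps ps_addA ps_addC ps_add0 ps_addN.

Lemma ps_mulA : associative (@ps_mul F).
Proof.
move=> a b c; apply: ps_ext => n.
apply: (@agree_eq n (tr n a * tr n b * tr n c)).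
  by rewrite -mulrA; apply: agree_mul; [|apply: agree_mul]; apply: agree_tr.
by apply: agree_mul; [apply: agree_mul|]; apply: agree_tr.
Qed.
Lemma ps_mulC : commutative (@ps_mul F).
Proof.
move=> a b; apply: ps_ext => n.
apply: (@agree_eq n (tr n a * tr n b)); first by apply: agree_mul; apply: agree_tr.
by rewrite mulrC; apply: agree_mul; apply: agree_tr.
Qed.
Lemma ps_mul1 : left_id (ps_const 1) (@ps_mul F).
Proof.
move=> a; apply: ps_ext => n.
apply: (@agree_eq n (1%:P * tr n a)); first by apply: agree_mul; [apply: agree_C|apply: agree_tr].
by rewrite mul1r; apply: agree_tr.
Qed.
Lemma ps_mulDl : left_distributive (@ps_mul F) (@ps_add F).
Proof.
move=> a b c; apply: ps_ext => n.
apply: (@agree_eq n ((tr n a + tr n b) * tr n c)).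
  by apply: agree_mul; [apply: agree_add|]; apply: agree_tr.
by rewrite mulrDl; apply: agree_add; apply: agree_mul; apply: agree_tr.
Qed.
Lemma ps_one0 : ps_const 1 != ps0 :> ps.
Proof.
apply/negP => /eqP /(congr1 (fun f => f 0%N)); rewrite /ps_const /ps0 /=.
by move/eqP; rewrite oner_eq0.
Qed.

HB.instance Definition _ := GRing.Zmodule_isComNzRing.Build ps ps_mulA ps_mulC ps_mul1 ps_mulDl ps_one0.

Lemma ps_addE (a b : ps) : ps_add a b = a + b. Proof. by []. Qed.
Lemma ps_mulE (a b : ps) : ps_mul a b = a * b. Proof. by []. Qed.
Lemma ps_const1 : ps_const 1 = 1 :> ps. Proof. by []. Qed.
Lemma ps_const0 : ps_const 0 = 0 :> ps.
Proof. by apply: ps_ext => n; rewrite /ps_const; case: eqP. Qed.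
Lemma ps_addnE (a b : ps) n : (a + b) n = a n + b n. Proof. by []. Qed.
Lemma ps_oppnE (a : ps) n : (- a) n = - a n. Proof. by []. Qed.
Lemma ps_0nE n : (0 : ps) n = 0. Proof. by []. Qed.
Lemma ps_mul0E (a b : ps) : (a * b) 0%N = a 0%N * b 0%N.
Proof. by change (ps_mul a b 0%N = a 0%N * b 0%N); rewrite /ps_mul big_ord1 subnn. Qed.


Definition Yps : ps := fun n => if n == 1%N then 1 else 0.

Lemma agree_X n : agree n 'X Yps.
Proof. by move=> m _; rewrite coefX /Yps; case: eqP. Qed.
Lemma agree_exp n P a j : agree n P a -> agree n (P ^+ j) (a ^+ j).
Proof.
move=> h; elim: j => [|j IH]; first by rewrite !expr0; apply: agree_C.
by rewrite !exprS; apply: agree_mul.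
Qed.

Lemma YexpE j (b : ps) n : (Yps ^+ j * b) n = if (j <= n)%N then b (n - j)%N else 0.
Proof.
change ((Yps ^+ j * b) n = ps_Ypow j b n).
apply: (@agree_eq n ('X^j * tr n b)).
  by apply: agree_mul; [apply: agree_exp; apply: agree_X | apply: agree_tr].
move=> m hm; rewrite coefXnM /ps_Ypow; case: ltnP => h.
  by [].
by rewrite agree_tr // (leq_trans (leq_subr _ _) hm).
Qed.

Lemma ps_YpowE j (a : ps) : ps_Ypow j a = Yps ^+ j * a.
Proof. by apply: ps_ext => n; rewrite YexpE. Qed.

Lemma Y_shift (a : ps) : a 0%N = 0 -> a = Yps * ps_shift a.
Proof.
move=> h0; apply: ps_ext => n; rewrite -[Yps]expr1 YexpE.
by case: n => [|n] //=; rewrite subn1.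
Qed.

Local Notation laur := (laur F).

Lemma laur_eq (x y : laur) : lden x = lden y -> lnum x = lnum y -> x = y.
Proof.
case: x => dx ax hx; case: y => dy ay hy /= edx eax; subst.
by rewrite (bool_irrelevance hx hy).
Qed.

Lemma normpP n (a : ps) : ((normp n a).1 <= n)%N /\ a = Yps ^+ (n - (normp n a).1) * (normp n a).2.
Proof.
elim: n a => [|n IH] a /=; first by rewrite expr0 mul1r.
case: ifP => [/eqP h0|_] /=; last by rewrite subnn expr0 mul1r.
have [h1 h2] := IH (ps_shift a); split; first by apply: (leq_trans h1).
rewrite {1}(Y_shift h0) {1}h2 mulrA -exprS; congr (_ ^+ _ * _).
by rewrite subSn.
Qed.

Definition num N (x : laur) : ps := Yps ^+ (N - lden x) * lnum x.

Lemma lden_mkL n (a : ps) : (lden (mkL n a) <= n)%N.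
Proof. by have [] := normpP n a. Qed.

Lemma num_mkL N n (a : ps) : (n <= N)%N -> num N (mkL n a) = Yps ^+ (N - n) * a.
Proof.
move=> hn; rewrite /num /=; have [h1 h2] := normpP n a.
rewrite [in RHS]h2 mulrA -exprD; congr (_ ^+ _ * _).
lia.
Qed.

Lemma num_inj N (x y : laur) : (lden x <= N)%N -> (lden y <= N)%N -> num N x = num N y -> x = y.
Proof.
wlog hxy : x y / (lden x <= lden y)%N.
  move=> W hx hy e; case: (leqP (lden x) (lden y)) => h; first exact: W.
  by symmetry; apply: W => //; apply: ltnW.
move=> hx hy e.
have edl : lden x = lden y.
  apply/eqP; rewrite eqn_leq hxy /=; rewrite leqNgt; apply/negP => hlt.
  have hy0 : lnum y 0%N != 0.
    by have := lnormal y; rewrite (gtn_eqF (leq_ltn_trans (leq0n _) hlt)).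
  have := congr1 (fun f => f (N - lden y)%N) e; rewrite /num !YexpE leqnn subnn.
  have -> : (N - lden x <= N - lden y)%N = false.
    apply/negbTE; rewrite -ltnNge; apply: ltn_sub2l => //; exact: (leq_trans hlt hy).
  by move=> h; move: hy0; rewrite -h eqxx.
apply: laur_eq => //; apply: ps_ext => m.
have := congr1 (fun f => f (m + (N - lden x)))%N e; rewrite /num !YexpE -edl leq_addl addnK.
done.
Qed.

Lemma num_shift N k (x : laur) : (lden x <= N)%N -> num (N + k) x = Yps ^+ k * num N x.
Proof.
move=> h; rewrite /num mulrA -exprD; congr (_ ^+ _ * _); lia.
Qed.

Lemma lden_add (x y : laur) : (lden (laur_add x y) <= lden x + lden y)%N.
Proof. exact: lden_mkL. Qed.
Lemma lden_mul (x y : laur) : (lden (laur_mul x y) <= lden x + lden y)%N.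
Proof. exact: lden_mkL. Qed.

Lemma num_add N (x y : laur) : (lden x + lden y <= N)%N ->
  num N (laur_add x y) = num N x + num N y.
Proof.
move=> h; rewrite /laur_add num_mkL // ps_addE !ps_YpowE mulrDr !mulrA -!exprD /num.
congr (_ ^+ _ * _ + _ ^+ _ * _); lia.
Qed.

Lemma num_mul N M (x y : laur) : (lden x <= N)%N -> (lden y <= M)%N ->
  num (N + M) (laur_mul x y) = num N x * num M y.
Proof.
move=> hx hy; rewrite /laur_mul num_mkL ?leq_add // ps_mulE /num.
rewrite mulrACA -exprD; congr (_ ^+ _ * _); lia.
Qed.

Lemma opp_normal (x : laur) : (lden x == 0%N) || ((fun n => - lnum x n) 0%N != 0).
Proof. by rewrite /= oppr_eq0; exact: lnormal x. Qed.
Definition laur_opp (x : laur) : laur := @Laur F (lden x) (fun n => - lnum x n) (opp_normal x).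

Lemma num_opp N (x : laur) : num N (laur_opp x) = - num N x.
Proof. by rewrite /num -mulrN. Qed.

Lemma num0 N : num N (laur0 F) = 0.
Proof. by rewrite /laur0 /of_ps num_mkL // ps_const0 mulr0. Qed.
Lemma num1 N : num N (laur1 F) = Yps ^+ N.
Proof. by rewrite /laur1 /of_ps num_mkL // ps_const1 mulr1 subn0. Qed.

Lemma lden0 : lden (laur0 F) = 0%N. Proof. by []. Qed.
Lemma lden1 : lden (laur1 F) = 0%N. Proof. by []. Qed.
Lemma lden_opp (x : laur) : lden (laur_opp x) = lden x. Proof. by []. Qed.

Lemma laur_addA : associative (@laur_add F).
Proof.
move=> x y z; pose N := (lden x + lden y + lden z)%N.
have h1 := lden_add x y; have h2 := lden_add y z.
have h3 := lden_add x (laur_add y z); have h4 := lden_add (laur_add x y) z.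
apply: (@num_inj N); [rewrite /N; lia|rewrite /N; lia|].
rewrite (num_add (x:=x)); last by rewrite /N; lia.
rewrite (num_add (x:=y)); last by rewrite /N; lia.
rewrite (num_add (x:=laur_add x y)); last by rewrite /N; lia.
rewrite (num_add (x:=x) (y:=y)); last by rewrite /N; lia.
by rewrite addrA.
Qed.

Lemma laur_addC : commutative (@laur_add F).
Proof.
move=> x y; have h1 := lden_add x y; have h2 := lden_add y x.
apply: (@num_inj (lden x + lden y)); [lia|lia|].
rewrite (num_add (x:=x)); last lia.
rewrite (num_add (x:=y)); last lia.
by rewrite addrC.
Qed.

Lemma laur_add0 : left_id (laur0 F) (@laur_add F).
Proof.
move=> x; have h1 := lden_add (laur0 F) x.
apply: (@num_inj (lden x)); [rewrite lden0 in h1; lia|lia|].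
rewrite num_add; last by rewrite lden0.
by rewrite num0 add0r.
Qed.

Lemma laur_addN : left_inverse (laur0 F) laur_opp (@laur_add F).
Proof.
move=> x; have h1 := lden_add (laur_opp x) x.
apply: (@num_inj (lden x + lden x)); [rewrite lden_opp in h1; lia|rewrite lden0; lia|].
rewrite num_add; last by rewrite lden_opp.
by rewrite num0 num_opp addNr.
Qed.

HB.instance Definition _ := gen_eqMixin laur.
HB.instance Definition _ := gen_choiceMixin laur.
HB.instance Definition _ := GRing.isZmodule.Build laur laur_addA laur_addC laur_add0 laur_addN.

Lemma laur_mulA : associative (@laur_mul F).
Proof.
move=> x y z; pose N := (lden x + lden y + lden z)%N.
have hx : (lden x <= N)%N by rewrite /N; lia.
have hy : (lden y <= N)%N by rewrite /N; lia.
have hz : (lden z <= N)%N by rewrite /N; lia.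
have h1 := lden_mul x y; have h2 := lden_mul y z.
have h3 := lden_mul x (laur_mul y z); have h4 := lden_mul (laur_mul x y) z.
apply: (@num_inj (N + N + N)); [lia|lia|].
rewrite -{1}addnA (num_mul (x:=x)); [|lia|lia].
rewrite (num_mul (x:=y)); [|lia|lia].
rewrite (num_mul (x:=laur_mul x y)); [|lia|lia].
rewrite (num_mul (x:=x) (y:=y)); [|lia|lia].
by rewrite mulrA.
Qed.

Lemma laur_mulC : commutative (@laur_mul F).
Proof.
move=> x y; pose N := (lden x + lden y)%N.
have h1 := lden_mul x y; have h2 := lden_mul y x.
apply: (@num_inj (N + N)); [rewrite /N; lia|rewrite /N; lia|].
rewrite (num_mul (x:=x)); [|rewrite /N; lia|rewrite /N; lia].
rewrite (num_mul (x:=y)); [|rewrite /N; lia|rewrite /N; lia].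
by rewrite mulrC.
Qed.

Lemma laur_mul1 : left_id (laur1 F) (@laur_mul F).
Proof.
move=> x; have h1 := lden_mul (laur1 F) x.
apply: (@num_inj (0 + lden x)); [rewrite lden1 in h1; lia|lia|].
rewrite num_mul; [|by rewrite lden1|by []].
by rewrite num1 expr0 mul1r.
Qed.

Lemma laur_mulDl : left_distributive (@laur_mul F) (@laur_add F).
Proof.
move=> x y z; pose N := (lden x + lden y + lden z)%N.
have hx : (lden x <= N)%N by rewrite /N; lia.
have hy : (lden y <= N)%N by rewrite /N; lia.
have hz : (lden z <= N)%N by rewrite /N; lia.
have h1 := lden_add x y; have h2 := lden_mul x z; have h3 := lden_mul y z.
have h4 := lden_mul (laur_add x y) z.
have h5 := lden_add (laur_mul x z) (laur_mul y z).
apply: (@num_inj (N + N + (N + N))); [lia|lia|].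
rewrite (num_add (x:=laur_mul x z)); [|lia].
rewrite (@num_shift (N+N) (N+N) (laur_mul x z)); [|lia].
rewrite (@num_shift (N+N) (N+N) (laur_mul y z)); [|lia].
rewrite (@num_shift (N+N) (N+N) (laur_mul (laur_add x y) z)); [|lia].
rewrite (num_mul (x:=laur_add x y)); [|lia|lia].
rewrite (num_mul (x:=x)); [|lia|lia].
rewrite (num_mul (x:=y)); [|lia|lia].
rewrite (num_add (x:=x)); [|lia].
by rewrite -!mulrDr mulrDl.
Qed.

Lemma laur_one0 : laur1 F != laur0 F.
Proof.
apply/negP => /eqP /(congr1 (fun x : laur => lnum x 0%N)); rewrite /= /ps_const /=.
by move/eqP; rewrite oner_eq0.
Qed.

HB.instance Definition _ := GRing.Zmodule_isComNzRing.Build laur laur_mulA laur_mulC laur_mul1 laur_mulDl laur_one0.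

Lemma laur_addE (x y : laur) : laur_add x y = x + y. Proof. by []. Qed.
Lemma laur_mulE (x y : laur) : laur_mul x y = x * y. Proof. by []. Qed.
Lemma laur0E : laur0 F = 0 :> laur. Proof. by []. Qed.
Lemma laur1E : laur1 F = 1 :> laur. Proof. by []. Qed.

End PS.

Section Basics.
Variable F : fieldType.
Local Notation L := (laur F).
Local Notation ps := (ps F).

Lemma lden_of_ps (a : ps) : lden (of_ps a) = 0%N. Proof. by []. Qed.
Lemma lnum_of_ps (a : ps) : lnum (of_ps a) = a. Proof. by []. Qed.
Lemma of_psK (x : L) : lden x = 0%N -> of_ps (lnum x) = x.
Proof. by move=> h; apply: laur_eq. Qed.
Lemma of_psD (a b : ps) : of_ps a + of_ps b = of_ps (a + b).
Proof.
apply: laur_eq => //=; rewrite !ps_YpowE !expr0 !mul1r; by [].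
Qed.
Lemma of_psM (a b : ps) : of_ps a * of_ps b = of_ps (a * b).
Proof. by apply: laur_eq. Qed.
Lemma of_psN (a : ps) : - of_ps a = of_ps (- a).
Proof. by apply: laur_eq. Qed.
Lemma of_ps0 : of_ps 0 = 0 :> L.
Proof. by rewrite -laur0E /laur0 ps_const0. Qed.
Lemma of_ps1 : of_ps 1 = 1 :> L.
Proof. by rewrite -laur1E. Qed.
Lemma of_psB (a b : ps) : of_ps a - of_ps b = of_ps (a - b).
Proof. by rewrite of_psN of_psD. Qed.

Lemma ps_const0E (c : F) : ps_const c 0%N = c. Proof. by []. Qed.
Lemma ps_mulnE0 (a b : ps) : (a * b) 0%N = a 0%N * b 0%N. Proof. exact: ps_mul0E. Qed.
Lemma ps_Y0 : Yps F 0%N = 0 :> F. Proof. by []. Qed.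

Definition Yinv : L := @Laur F 1 (ps_const 1) (introT orP (or_intror (oner_neq0 F))).

Lemma YinvY : Yinv * laurY F = 1.
Proof.
have h := lden_mul Yinv (laurY F).
apply: (@num_inj _ 1); [exact: h|by []|].
rewrite -laur1E num1 expr1 -[1%N]/(1 + 0)%N num_mul //.
have e1 : lden Yinv = 1%N by [].
have e2 : lnum Yinv = 1 by [].
have e3 : lden (laurY F) = 0%N by [].
have e4 : lnum (laurY F) = Yps F by [].
by rewrite /num e1 e2 e3 e4 subnn !expr0 !mul1r.
Qed.

Lemma Y_cancel (a b : L) : laurY F * a = laurY F * b -> a = b.
Proof.
move=> h; have := congr1 (fun z => Yinv * z) h.
by rewrite !mulrA YinvY !mul1r.
Qed.

Lemma laurY_of_ps : laurY F = of_ps (Yps F). Proof. by []. Qed.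
Lemma laurC_of_ps (c : F) : laurC c = of_ps (ps_const c). Proof. by []. Qed.

Lemma laurY_neq0 : laurY F != 0.
Proof.
apply/negP => /eqP /(congr1 (fun x : L => lnum x 1%N)).
rewrite -laur0E /= /ps_const /=. by move/eqP; rewrite oner_eq0.
Qed.

End Basics.

Section Main.
Variable k : fieldType.
Local Notation F := (ratfun k).
Local Notation L := (laur (ratfun k)).
Local Notation ps := (Defs.ps (ratfun k)).
Local Notation Y := (laurY (ratfun k)).
Local Notation X := (XX k).

Lemma rfCD a b : rfC k (a + b) = rfC k a + rfC k b.
Proof. by rewrite /rfC polyCD rmorphD. Qed.
Lemma rfCM a b : rfC k (a * b) = rfC k a * rfC k b.
Proof. by rewrite /rfC polyCM rmorphM. Qed.
Lemma rfCN a : rfC k (- a) = - rfC k a.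
Proof. by rewrite /rfC polyCN rmorphN. Qed.
Lemma rfC0 : rfC k 0 = 0.
Proof. by rewrite /rfC polyC0 rmorph0. Qed.
Lemma rfC1 : rfC k 1 = 1.
Proof. by rewrite /rfC polyC1 rmorph1. Qed.

Lemma rfX_rfC c d : rfX k * rfC k c = rfC k d -> c = 0.
Proof.
rewrite /rfX /rfC -rmorphM => /eqP; rewrite tofrac_eq => /eqP h.
by have := congr1 (fun p : {poly k} => p`_1) h; rewrite coefXM coefC /= coefC.
Qed.
Lemma rfX_neq c : rfX k <> rfC k c.
Proof.
rewrite /rfX /rfC => /eqP; rewrite tofrac_eq => /eqP h.
have := congr1 (fun p : {poly k} => p`_1) h; rewrite coefX coefC /=.
by move/eqP; rewrite oner_eq0.
Qed.

Lemma R_add (x y : L) : RR k x -> RR k y -> RR k (x + y).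
Proof.
move=> [hx [c hc]] [hy [d hd]]; rewrite -(of_psK hx) -(of_psK hy) of_psD; split=> //.
by exists (c + d); rewrite lnum_of_ps ps_addnE hc hd rfCD.
Qed.
Lemma R_mul (x y : L) : RR k x -> RR k y -> RR k (x * y).
Proof.
move=> [hx [c hc]] [hy [d hd]]; rewrite -(of_psK hx) -(of_psK hy) of_psM; split=> //.
by exists (c * d); rewrite lnum_of_ps ps_mul0E hc hd rfCM.
Qed.
Lemma R_opp (x : L) : RR k x -> RR k (- x).
Proof.
move=> [hx [c hc]]; rewrite -(of_psK hx) of_psN; split=> //.
by exists (- c); rewrite lnum_of_ps ps_oppnE hc rfCN.
Qed.
Lemma R_1 : RR k (1 : L).
Proof. by split=> //; exists 1; rewrite rfC1. Qed.
Lemma R_0 : RR k (0 : L).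
Proof. by split=> //; exists 0; rewrite rfC0. Qed.
Lemma R_const c : RR k (cK k c).
Proof. by split=> //; exists c. Qed.

Lemma M_R (x : L) : MM k x -> RR k x.
Proof. by move=> [h1 h2]; split=> //; exists 0; rewrite rfC0. Qed.
Lemma M_mul (x w : L) : MM k x -> lden w = 0%N -> MM k (x * w).
Proof.
move=> [hx h0] hw; rewrite -(of_psK hx) -(of_psK hw) of_psM; split=> //.
by rewrite lnum_of_ps ps_mul0E h0 mul0r.
Qed.
Lemma V_mul (x w : L) : lden x = 0%N -> lden w = 0%N -> lden (x * w) = 0%N.
Proof. by move=> hx hw; rewrite -(of_psK hx) -(of_psK hw) of_psM. Qed.
Lemma V_add (x w : L) : lden x = 0%N -> lden w = 0%N -> lden (x + w) = 0%N.
Proof. by move=> hx hw; rewrite -(of_psK hx) -(of_psK hw) of_psD. Qed.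
Lemma R_V (x : L) : RR k x -> lden x = 0%N.
Proof. by case. Qed.
Lemma M_add (x y : L) : MM k x -> MM k y -> MM k (x + y).
Proof.
move=> [hx h0] [hy h1]; rewrite -(of_psK hx) -(of_psK hy) of_psD; split=> //.
by rewrite lnum_of_ps ps_addnE h0 h1 addr0.
Qed.

Lemma MM_Y (w : L) : lden w = 0%N -> MM k (Y * w).
Proof.
move=> hw; rewrite -(of_psK hw) laurY_of_ps of_psM; split=> //.
by rewrite lnum_of_ps ps_mul0E ps_Y0 mul0r.
Qed.

Lemma MM_YE (x : L) : MM k x -> exists w : L, lden w = 0%N /\ x = Y * w.
Proof.
move=> [hx h0]; exists (of_ps (ps_shift (lnum x))); split=> //.
by rewrite laurY_of_ps of_psM -Y_shift // of_psK.
Qed.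

Lemma K1 (x : L) : RR k x -> RR k (X * x) -> MM k x.
Proof.
move=> [hx [c hc]] [_ [d hd]]; split=> //.
move: hd; rewrite -(of_psK hx) /XX laurC_of_ps of_psM lnum_of_ps ps_mul0E ps_const0E hc.
by move/rfX_rfC => c0; rewrite hc c0 rfC0.
Qed.

Lemma X_V : lden X = 0%N. Proof. by []. Qed.
Lemma Y_V : lden Y = 0%N. Proof. by []. Qed.

End Main.

Section Generic.
Variables (K : rawRing) (R : K -> Prop).

Lemma fsum_mono (P Q : K -> Prop) z : (forall a, P a -> Q a) -> fsum P z -> fsum Q z.
Proof. move=> h; elim=> [|a y Pa _ IH]; [exact: fsum0| exact: fsumS (h _ Pa) IH]. Qed.

Lemma prodI_mono (A A' B B' : K -> Prop) : subsetK A A' -> subsetK B B' ->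
  subsetK (prodI A B) (prodI A' B').
Proof.
move=> hA hB z; apply: fsum_mono => a [u [v [hu hv ->]]].
by exists u, v; split; [apply: hA|apply: hB|].
Qed.

Lemma prodI_ext (A A' B B' : K -> Prop) : eqsetK A A' -> eqsetK B B' ->
  eqsetK (prodI A B) (prodI A' B').
Proof.
move=> hA hB z; split; apply: prodI_mono => x; by [move/hA|move/hB].
Qed.

Lemma tcl_ext (A B : K -> Prop) : eqsetK A B -> eqsetK (tcl R A) (tcl R B).
Proof.
move=> h x; split=> [[J [h1 h2 h3]]|[J [h1 h2 h3]]]; exists J; split=> // y /h2; by move/h.
Qed.

Lemma is_ideal_ext (I I' : K -> Prop) : eqsetK I I' -> is_ideal R I' -> is_ideal R I.
Proof.
move=> h [h1 h2 h3 h4]; split.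
- by move=> x /h /h1.
- by apply/h.
- by move=> x y /h hx /h hy; apply/h; apply: h3.
- by move=> r x hr /h hx; apply/h; apply: h4.
Qed.

End Generic.

Section Main2.
Variable k : fieldType.
Local Notation F := (ratfun k).
Local Notation L := (laur (ratfun k)).
Local Notation Y := (laurY (ratfun k)).
Local Notation X := (XX k).
Local Notation R := (RR k).

Lemma raddE (x y : KK k) : radd x y = (x : L) + y. Proof. by []. Qed.
Lemma rmulE (x y : KK k) : rmul x y = (x : L) * y. Proof. by []. Qed.
Lemma rzeroE : rzero (KK k) = (0 : L). Proof. by []. Qed.
Lemma YYE : YY k = Y. Proof. by []. Qed.
Ltac norm := rewrite ?raddE ?rmulE ?rzeroE ?laur_addE ?laur_mulE ?laur0E ?laur1E ?YYE.

Definition Ip (z : KK k) : Prop := exists v : L,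
  [/\ lden v = 0%N, exists a b, lnum v 0%N = rfC k a + rfC k b * rfX k & z = Y * v].

Lemma lnum_X : lnum X 0%N = rfX k. Proof. by []. Qed.
Lemma lnum_add0 (x y : L) : lden x = 0%N -> lden y = 0%N ->
  lnum (x + y) 0%N = lnum x 0%N + lnum y 0%N.
Proof. by move=> hx hy; rewrite -(of_psK hx) -(of_psK hy) of_psD. Qed.
Lemma lnum_mul0 (x y : L) : lden x = 0%N -> lden y = 0%N ->
  lnum (x * y) 0%N = lnum x 0%N * lnum y 0%N.
Proof. by move=> hx hy; rewrite -(of_psK hx) -(of_psK hy) of_psM lnum_of_ps ps_mul0E. Qed.
Lemma lnum_opp0 (x : L) : lnum (- x) 0%N = - lnum x 0%N.
Proof. by []. Qed.
Lemma lnum_cK c : lnum (cK k c) 0%N = rfC k c. Proof. by []. Qed.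
Lemma lden_cK c : lden (cK k c) = 0%N. Proof. by []. Qed.

Lemma decompM (v : L) a b : lden v = 0%N -> lnum v 0%N = rfC k a + rfC k b * rfX k ->
  MM k (v - (cK k a + cK k b * X)).
Proof.
move=> hv h; rewrite -(of_psK hv) /cK /XX !laurC_of_ps of_psM of_psD of_psB.
split=> //; rewrite lnum_of_ps ps_addnE ps_oppnE ps_addnE ps_mul0E !ps_const0E h.
by rewrite subrr.
Qed.

Lemma lnum_combo (r s : L) c d : lden r = 0%N -> lden s = 0%N ->
  lnum r 0%N = rfC k c -> lnum s 0%N = rfC k d ->
  lnum (r + s * X) 0%N = rfC k c + rfC k d * rfX k.
Proof.
move=> hr hs h1 h2; rewrite -(of_psK hr) -(of_psK hs) /XX laurC_of_ps of_psM of_psD.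
by rewrite lnum_of_ps ps_addnE ps_mul0E ps_const0E h1 h2.
Qed.

Lemma II_Ip : eqsetK (II k) Ip.
Proof.
move=> z; split.
- move=> [a [b [m [hm ->]]]]; exists (cK k a + cK k b * X + m); split.
  + by apply: V_add; [apply: V_add; [|apply: V_mul]|case: hm].
  + case: hm => hm0 hm1.
    by exists a, b; rewrite lnum_add0 ?lnum_add0 ?lnum_mul0 ?hm1 ?addr0.
  + by [].
- move=> [v [hv [a [b h]] ->]]; exists a, b, (v - (cK k a + cK k b * X)); split.
  + exact: decompM.
  + rewrite laur_addE laur_addE !laur_mulE YYE; congr (_ * _); ring.
Qed.

Lemma Rspan_Ip : eqsetK (Rspan R (YY k :: laur_mul (XX k) (YY k) :: nil)) Ip.
Proof.
move=> z; split.
- move=> /= [r [y [hr [[r0 [y0 [hr0 [-> ->]]]] ->]]]].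
  have [hrv [c hc]] := hr; have [hr0v [d hd]] := hr0.
  exists (r + r0 * X); split.
  + by apply: V_add => //; apply: V_mul.
  + by exists c, d; apply: lnum_combo.
  + norm; ring.
- move=> [v [hv [a [b h]] ->]].
  have hm := decompM hv h.
  exists (cK k a + (v - (cK k a + cK k b * X))), (cK k b * (X * Y) + 0).
  split; first by apply: R_add; [apply: R_const|apply: M_R].
  split; first by exists (cK k b), 0; split; [apply: R_const|].
  norm; ring.
Qed.

Lemma Ip_ideal : is_ideal R Ip.
Proof.
split.
- by move=> z [v [hv _ ->]]; apply: M_R; apply: MM_Y.
- exists 0; split=> //; first by exists 0, 0; rewrite rfC0 mul0r addr0.
  by rewrite rzeroE mulr0.
- move=> x y [v [hv [a [b h]] ->]] [w [hw [c [d h']] ->]].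
  exists (v + w); split; first exact: V_add.
    by exists (a + c), (b + d); rewrite lnum_add0 // h h' !rfCD; ring.
  by rewrite raddE mulrDr.
- move=> r x [hr [e he]] [v [hv [a [b h]] ->]].
  exists (r * v); split; first exact: V_mul.
    by exists (e * a), (e * b); rewrite lnum_mul0 // he h !rfCM; ring.
  by rewrite rmulE mulrCA.
Qed.

Lemma II_ideal : is_ideal R (II k).
Proof. exact: (is_ideal_ext II_Ip Ip_ideal). Qed.

Lemma Ip_Y (v : L) c : R v -> lnum v 0%N = rfC k c -> Ip (Y * v).
Proof.
move=> [hv _] h; exists v; split=> //; exists c, 0.
by rewrite rfC0 mul0r addr0.
Qed.

Lemma JJ_ideal : is_ideal R (JJ k).
Proof.
split.
- by move=> z [r [[hr _] ->]]; apply: M_R; apply: MM_Y.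
- by exists 0; split; [exact: R_0| rewrite rzeroE laur_mulE mulr0].
- move=> x y [r [hr ->]] [s [hs ->]]; exists (r + s); split; first exact: R_add.
  by rewrite raddE !laur_mulE mulrDr.
- move=> r x hr [s [hs ->]]; exists (r * s); split; first exact: R_mul.
  by rewrite rmulE !laur_mulE mulrCA.
Qed.

Lemma JJ_II : subsetK (JJ k) (II k).
Proof.
move=> z [r [hr ->]]; apply/II_Ip; have [hv [c hc]] := hr.
exact: (Ip_Y hr hc).
Qed.


End Main2.

Section Alg.
Local Open Scope quotient_scope.
Variable k : fieldType.
Local Notation tf := (@FracField.tofrac {poly k}).

Lemma fracE (f : {fraction {poly k}}) :
  exists p q : {poly k}, q != 0 /\ f = tf p / tf q.
Proof.
elim/quotW: f => x.
exists (x.1), (x.2); split; first exact: denom_ratioP.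
rewrite -[x in LHS]Ratio_numden.
have hd := denom_ratioP x.
unlock FracField.tofrac.
rewrite /GRing.inv /= /GRing.mul /=.
rewrite !piE.
apply/eqmodP; rewrite /= FracField.equivfE !numden_Ratio ?oner_eq0 ?mulr1 ?mul1r //.
by rewrite mulrC.
Qed.

Lemma fracE_cop (f : {fraction {poly k}}) :
  exists p q : {poly k}, [/\ q != 0, coprimep p q & f = tf p / tf q].
Proof.
have [p [q [hq ->]]] := fracE f.
set g := gcdp p q.
have hg : g != 0 by rewrite gcdp_eq0 negb_and hq orbT.
have hp := divpK (dvdp_gcdl p q); have hq' := divpK (dvdp_gcdr p q).
have hcop := @coprimep_div_gcd _ p q; rewrite -/g in hp hq' hcop.
set p' := p %/ g in hp hcop *; set q' := q %/ g in hq' hcop *.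
exists p', q'; split.
- by apply: contraNneq hq => e; rewrite -hq' -/g e mul0r.
- by apply: hcop; rewrite hq orbT.
- rewrite -{1}hp -{1}hq' -/g !rmorphM /=.
  have hg' : tf g != 0 by rewrite tofrac_eq0.
  by rewrite invfM mulrACA divff // mulr1.
Qed.

Definition Ev (f : {fraction {poly k}}) (ds : seq k) :=
  foldr (fun d acc => tf d%:P + f * acc) 1 ds.

Lemma poly_case (g : {poly k}) (ds : seq k) :
  foldr (fun d acc => d%:P + g * acc) 1 ds = 0 -> (size g <= 1)%N.
Proof.
move=> h; rewrite leqNgt; apply/negP => hg.
have hg0 : g != 0 by rewrite -size_poly_eq0 -lt0n (ltn_trans _ hg).
have : size (foldr (fun d acc => d%:P + g * acc) 1 ds) = ((size g).-1 * size ds).+1.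
  elim: ds {h} => [|d ds IH] /=; first by rewrite size_poly1 muln0.
  have hne : foldr (fun d acc => d%:P + g * acc) 1 ds != 0.
    by rewrite -size_poly_eq0 IH.
  rewrite addrC size_polyDl.
    rewrite size_mul // IH mulnS; move: ((size g).-1 * size ds)%N => t; case: (size g) hg => [|s] // _; simpl; lia.
  rewrite size_mul // IH (leq_ltn_trans (size_polyC_leq1 d)) //; move: ((size g).-1 * size ds)%N => t; case: (size g) hg => [|s] // hs; simpl; lia.
by rewrite h size_poly0.
Qed.

Fixpoint Hp (p q : {poly k}) (ds : seq k) : {poly k} :=
  match ds with [::] => 1 | d :: ds' => d%:P * q ^+ (size ds').+1 + p * Hp p q ds' end.

Lemma alg_closed (f : {fraction {poly k}}) (ds : seq k) :
  Ev f ds = 0 -> exists c : k, f = tf c%:P.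
Proof.
move=> hE.
have [p [q [hq hpq ef]]] := fracE_cop f.
have htq : tf q != 0 by rewrite tofrac_eq0.
pose H := Hp p q.
have hH : forall ds, tf (H ds) = tf q ^+ size ds * Ev f ds.
  rewrite /H; elim=> [|d ds' IH] /=; first by rewrite tofrac1 expr0 mulr1.
  rewrite tofracD !tofracM tofracXn IH.
  have -> : tf q ^+ (size ds').+1 * (tf d%:P + f * Ev f ds') =
    tf d%:P * tf q ^+ (size ds').+1 + tf p * (tf q ^+ size ds' * Ev f ds') * (tf q / tf q).
    by rewrite ef exprS; ring.
  by rewrite divff // mulr1.
have hdiv : forall ds, q %| H ds - p ^+ size ds.
  rewrite /H; elim=> [|d ds' IH] /=; first by rewrite expr0 subrr dvdp0.
  have -> : d%:P * q ^+ (size ds').+1 + p * Hp p q ds' - p ^+ (size ds').+1 =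
    q * (d%:P * q ^+ size ds') + p * (Hp p q ds' - p ^+ size ds').
    by rewrite exprS exprS; ring.
  by apply: dvdp_add; [apply: dvdp_mulIl|apply: dvdp_mull].
have H0 : H ds = 0.
  by apply/eqP; rewrite -tofrac_eq0 hH hE mulr0.
have hqp : q %| p ^+ size ds by move: (hdiv ds); rewrite H0 sub0r dvdpNr.
have hcop : coprimep q (p ^+ size ds) by apply: coprimep_expr; rewrite coprimep_sym.
have : coprimep q q by apply: (coprimep_dvdl hqp hcop).
rewrite coprimepp => /size_poly1P [c hc0 hqc].
pose g := p * (c^-1)%:P.
have efg : f = tf g.
  rewrite ef hqc /g tofracM.
  have hcc : tf (c%:P) != 0 by rewrite tofrac_eq0 polyC_eq0.
  have -> : tf (c^-1)%:P = (tf c%:P)^-1.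
    apply: (@mulfI _ (tf c%:P)) => //; rewrite divff // -tofracM -polyCM divff //.
  by [].
have : foldr (fun d acc => d%:P + g * acc) 1 ds = 0.
  apply/eqP; rewrite -tofrac_eq0; apply/eqP; rewrite -hE efg.
  elim: (ds) => [|d ds' IH] /=; first by rewrite tofrac1.
  by rewrite tofracD tofracM IH.
move/poly_case/size1_polyC => eg.
by exists (g`_0); rewrite efg {1}eg.
Qed.

End Alg.

Section Main3.
Variable k : fieldType.
Local Notation F := (ratfun k).
Local Notation L := (laur (ratfun k)).
Local Notation Y := (laurY (ratfun k)).
Local Notation X := (XX k).
Local Notation R := (RR k).
Ltac norm := cbn [rmul radd rzero rone KK LaurRing YY];
  try change (@laur_mul (ratfun k)) with (fun x y : L => x * y);
  try change (@laur_add (ratfun k)) with (fun x y : L => x + y);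
  try change (laur0 (ratfun k)) with (0 : L);
  try change (laur1 (ratfun k)) with (1 : L); try change (YY k) with Y; cbv beta.

Lemma II_of (v : L) a b : lden v = 0%N -> lnum v 0%N = rfC k a + rfC k b * rfX k ->
  II k (Y * v).
Proof. by move=> hv h; apply/II_Ip; exists v; split=> //; exists a, b. Qed.

Lemma II_R (v : L) : R v -> II k (Y * v).
Proof.
move=> [hv [c hc]]; apply: (II_of (a := c) (b := 0)) => //.
by rewrite hc rfC0 mul0r addr0.
Qed.

Lemma II_RX (v : L) : R v -> II k (Y * (v * X)).
Proof.
move=> [hv [c hc]]; apply: (II_of (a := 0) (b := c)); first by apply: V_mul.
by rewrite lnum_mul0 // hc lnum_X rfC0 add0r.
Qed.

Lemma II_sub_R : subsetK (II k) R.
Proof. by case: (II_ideal k). Qed.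

Lemma tJ : eqsetK (tcl R (JJ k)) (JJ k).
Proof.
move=> x; split.
- move=> [J0 [_ hsub hv]].
  have hYi : colon R J0 (Yinv (ratfun k)).
    by move=> i /hsub [r [hr ->]]; norm; rewrite mulrA YinvY mul1r.
  have h := hv _ hYi.
  exists (x * Yinv (ratfun k)); split; first exact: h.
  by norm; rewrite mulrCA [Y * _]mulrC YinvY mulr1.
- move=> [r [hr ->]]; exists (Rspan R [:: YY k]); split.
  + by exists [:: YY k].
  + move=> z [r1 [y [hr1 [-> ->]]]]; exists r1; split; [exact: hr1|norm; ring].
  + move=> z hz.
    have hzY : R (rmul z (YY k)).
      apply: hz; exists 1, 0; split; first exact: R_1.
      by split=> //; norm; ring.
    move: hzY; norm => hzY.
    have -> : Y * r * z = z * Y * r by ring.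
    exact: R_mul.
Qed.

Lemma YinJ0 : Rspan R (YY k :: laur_mul (XX k) (YY k) :: nil) (YY k).
Proof.
exists 1, 0; split; first exact: R_1.
split; last by norm; ring.
by exists 0, 0; split; [exact: R_0|split=> //; norm; ring].
Qed.
Lemma XYinJ0 : Rspan R (YY k :: laur_mul (XX k) (YY k) :: nil) (laur_mul (XX k) (YY k)).
Proof.
exists 0, (laur_mul (XX k) (YY k)); split; first exact: R_0.
split; last by norm; ring.
by exists 1, 0; split; [exact: R_1|split=> //; norm; ring].
Qed.

Lemma tI : eqsetK (tcl R (II k)) (MM k).
Proof.
move=> x; split.
- move=> [J0 [_ hsub hv]].
  have h1 : colon R J0 1.
    move=> i /hsub /II_sub_R; norm; rewrite mul1r; exact.
  have h2 : colon R J0 X.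
    move=> i /hsub /II_Ip [v [hv0 _ ->]]; norm.
    rewrite mulrCA; apply: M_R; apply: MM_Y; apply: V_mul; [exact: X_V|exact: hv0].
  have hx1 := hv _ h1; have hx2 := hv _ h2.
  move: hx1 hx2; norm => hx1 hx2.
  move: hx1; rewrite mulr1 => hx1.
  apply: K1; [exact: hx1|rewrite mulrC; exact: hx2].
- move=> hx; exists (Rspan R (YY k :: laur_mul (XX k) (YY k) :: nil)); split.
  + by exists (YY k :: laur_mul (XX k) (YY k) :: nil).
  + by move=> z /Rspan_Ip /II_Ip.
  + move=> z hz.
    have h1 := hz _ YinJ0; have h2 := hz _ XYinJ0.
    move: h1 h2; norm => h1 h2.
    have hm : MM k (z * Y).
      apply: K1; [exact: h1|rewrite mulrCA; exact: h2].
    have [w [hw ->]] := MM_YE hx.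
    have -> : Y * w * z = z * Y * w by ring.
    apply: M_R; apply: M_mul; [exact: hm|exact: hw].
Qed.

Definition YM (z : KK k) := exists w : L, lden w = 0%N /\ z = Y * Y * w.

Lemma prodII_YM : subsetK (prodI (II k) (II k)) YM.
Proof.
move=> z; elim=> [|a y [i [j [hi hj ->]]] _ [w [hw ->]]].
  by exists 0; split; [by []|norm; ring].
move: hi hj => /II_Ip [v [hv _ ->]] /II_Ip [v' [hv' _ ->]].
exists (v * v' + w); split; first by apply: V_add; [apply: V_mul|].
norm; ring.
Qed.

Definition J0s : list (KK k) := [:: Y * Y; X * Y * Y].

Lemma tYM (A : KK k -> Prop) : subsetK A (prodI (II k) (II k)) ->
  subsetK (Rspan R J0s) A -> eqsetK (tcl R A) YM.
Proof.
move=> hA hJ x; split.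
- move=> [J0 [_ hsub hv]].
  have c1 : colon R J0 (Yinv (ratfun k)).
    move=> i /hsub /hA /prodII_YM [w [hw ->]]; norm.
    have -> : Yinv (ratfun k) * (Y * Y * w) = (Yinv (ratfun k) * Y) * (Y * w) by ring.
    by rewrite YinvY mul1r; apply: M_R; apply: MM_Y.
  have c2 : colon R J0 (Yinv (ratfun k) * X).
    move=> i /hsub /hA /prodII_YM [w [hw ->]]; norm.
    have -> : Yinv (ratfun k) * X * (Y * Y * w) = (Yinv (ratfun k) * Y) * (Y * (X * w)) by ring.
    rewrite YinvY mul1r; apply: M_R; apply: MM_Y; apply: V_mul; [exact: X_V|exact: hw].
  have h1 := hv _ c1; have h2 := hv _ c2.
  move: h1 h2; norm => h1 h2.
  have hm : MM k (x * Yinv (ratfun k)).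
    apply: K1; [exact: h1|].
    have -> : X * (x * Yinv (ratfun k)) = x * (Yinv (ratfun k) * X) by ring.
    exact: h2.
  have [w [hw e]] := MM_YE hm.
  exists w; split; first exact: hw.
  have -> : x = Y * (x * Yinv (ratfun k)).
    by rewrite mulrCA [Y * Yinv _]mulrC YinvY mulr1.
  by rewrite e mulrA.
- move=> [w [hw ->]]; exists (Rspan R J0s); split.
  + by exists J0s.
  + exact: hJ.
  + move=> z hz.
    have h1 : R (rmul z (Y * Y)).
      apply: hz; exists 1, 0; split; first exact: R_1.
      split; last by norm; ring.
      by exists 0, 0; split; [exact: R_0|split; [by []|norm; ring]].
    have h2 : R (rmul z (X * Y * Y)).
      apply: hz; exists 0, (X * Y * Y); split; first exact: R_0.
      split; last by norm; ring.
      by exists 1, 0; split; [exact: R_1|split; [by []|norm; ring]].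
    move: h1 h2; norm => h1 h2.
    have hm : MM k (z * (Y * Y)).
      apply: K1; [exact: h1|].
      have -> : X * (z * (Y * Y)) = z * (X * Y * Y) by ring.
      exact: h2.
    have -> : Y * Y * w * z = z * (Y * Y) * w by ring.
    apply: M_R; apply: M_mul; [exact: hm|exact: hw].
Qed.

Lemma J0s_sub : subsetK (Rspan R J0s) (prodI (JJ k) (II k)).
Proof.
move=> i [r [y [hr [[r' [y' [hr' [-> ->]]]] ->]]]].
have -> : @radd (KK k) (@rmul (KK k) r (Y * Y)) (@radd (KK k) (@rmul (KK k) r' (X * Y * Y)) (rzero (KK k))) =
  @radd (KK k) (@rmul (KK k) Y (Y * r)) (@radd (KK k) (@rmul (KK k) Y (Y * (r' * X))) (rzero (KK k))).
  by norm; ring.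
apply: fsumS.
  exists Y, (Y * r); split; [|exact: II_R|by []].
  by exists 1; split; [exact: R_1|norm; ring].
apply: fsumS; last exact: fsum0.
exists Y, (Y * (r' * X)); split; [|exact: II_RX|by []].
by exists 1; split; [exact: R_1|norm; ring].
Qed.

Lemma tJI : eqsetK (tcl R (prodI (JJ k) (II k))) (tcl R (prodI (II k) (II k))).
Proof.
have e1 := tYM (A := prodI (JJ k) (II k)) (prodI_mono (@JJ_II k) (fun _ h => h)) J0s_sub.
have e2 := tYM (A := prodI (II k) (II k)) (fun _ h => h)
  (fun z h => prodI_mono (@JJ_II k) (fun _ h => h) (J0s_sub h)).
by move=> x; rewrite e1 e2.
Qed.

Lemma notJM : ~ eqsetK (JJ k) (MM k).
Proof.
move=> h.
have : MM k (X * Y) by rewrite mulrC; apply: MM_Y; exact: X_V.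
move/h => [r [[hr [c hc]] e]].
move: e; norm => e.
have e' : Y * X = Y * r by rewrite -e mulrC.
move/Y_cancel: e' => e2.
by apply: (@rfX_neq k c); rewrite -hc -e2.
Qed.

Lemma prodRI (I : KK k -> Prop) : is_ideal R I -> eqsetK (prodI R I) I.
Proof.
move=> [h1 h2 h3 h4] x; split.
- elim=> [|a y [r [i [hr hi ->]]] _ IH]; first exact: h2.
  by apply: h3 => //; apply: h4.
- move=> hx.
  have -> : x = @radd (KK k) (@rmul (KK k) 1 x) (rzero (KK k)) by norm; ring.
  apply: fsumS; last exact: fsum0.
  by exists 1, x; split; [exact: R_1|exact: hx|].
Qed.

Lemma II_Rspan : eqsetK (II k) (Rspan R (YY k :: laur_mul (XX k) (YY k) :: nil)).
Proof. by move=> x; rewrite II_Ip Rspan_Ip. Qed.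

Lemma notFTB : ~ finite_t_basic_property R.
Proof.
move=> H.
have hI := II_ideal k.
have hnz : nonzero_set (II k).
  exists (YY k); split.
    have := II_R (R_1 k); rewrite mulr1; exact.
  by move/eqP; rewrite rzeroE; apply/negP; exact: laurY_neq0.
have hfg : fingen R (II k) by exists (YY k :: laur_mul (XX k) (YY k) :: nil); exact: II_Rspan.
have hred : t_reduction R (JJ k) (II k).
  split; first exact: JJ_ideal.
  split; first exact: JJ_II.
  exists 1%N.
  have e1 : eqsetK (prodI (JJ k) (powI R (II k) 1)) (prodI (JJ k) (II k)).
    exact: (prodI_ext (fun _ => iff_refl _) (prodRI hI)).
  have e2 : eqsetK (powI R (II k) 2) (prodI (II k) (II k)).
    exact: (prodI_ext (prodRI hI) (fun _ => iff_refl _)).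
  move=> x; split=> h.
    by apply/(tcl_ext _ e2 x)/tJI/(tcl_ext _ e1 x).
  by apply/(tcl_ext _ e1 x)/tJI/(tcl_ext _ e2 x).
have := H _ hI hnz hfg (JJ k) hred => e.
apply: notJM => x; split=> h.
  by apply/tI/e/tJ.
by apply/tJ/e/tI.
Qed.

End Main3.

Section Int.
Variable k : fieldType.
Local Notation F := (ratfun k).
Local Notation L := (laur (ratfun k)).
Local Notation ps := (Defs.ps (ratfun k)).
Local Notation R := (RR k).

Lemma normp_nz n (a : ps) : a 0%N != 0 -> normp n a = (n, a).
Proof. by case: n => [|n] //= h; rewrite (negbTE h). Qed.

Lemma mkL_nz n (a : ps) : a 0%N != 0 -> lden (mkL n a) = n /\ lnum (mkL n a) = a.
Proof. by move=> h; rewrite /mkL /= normp_nz. Qed.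

Lemma me_cons (c x : KK k) cs : monic_eval (c :: cs) x = (c : L) + (x : L) * monic_eval cs x.
Proof. by []. Qed.

Lemma big_case (x : L) (cs : list (KK k)) : (0 < lden x)%N ->
  (forall c, List.In c cs -> lden (c : L) = 0%N) -> lnum (monic_eval cs (x : KK k) : L) 0%N != 0.
Proof.
move=> hx; elim: cs => [|c cs IH] hc.
  have -> : lnum (monic_eval [::] (x : KK k) : L) 0%N = 1 by [].
  exact: oner_neq0.
have hc0 : lden (c : L) = 0%N by apply: hc; left.
have hx0 : lnum x 0%N != 0.
  by have := lnormal x; rewrite (gtn_eqF hx).
have hh := IH (fun c' h => hc c' (or_intror h)).
suff key : forall h : L, lnum h 0%N != 0 -> lnum (laur_add c (laur_mul x h)) 0%N != 0.
  exact: key _ hh.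
move=> h {}hh.
have hnz : (lnum x * lnum h) 0%N != 0 by rewrite ps_mul0E mulf_neq0.
have [e1 e2] := @mkL_nz (lden x + lden h) (ps_mul (lnum x) (lnum h)) hnz.
change (laur_mul x h) with (mkL (lden x + lden h) (ps_mul (lnum x) (lnum h))).
set M := mkL _ _ in e1 e2 *.
have hM : (0 < lden M)%N by rewrite e1 (leq_trans hx) // leq_addr.
have hMa : lnum M 0%N != 0 by rewrite e2.
rewrite /laur_add hc0.
set b := ps_add _ _.
have hb : b 0%N = lnum M 0%N.
  rewrite /b /ps_add /ps_Ypow; cbv beta.
  by rewrite leqNgt hM /= add0r.
have hb0 : b 0%N != 0 by rewrite hb.
have [_ ->] := @mkL_nz (0 + lden M) b hb0.
exact: hb0.
Qed.

Lemma small_case (x : L) (cs : list (KK k)) : lden x = 0%N ->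
  (forall c, List.In c cs -> R c) ->
  lden (monic_eval cs (x : KK k) : L) = 0%N /\ exists ds, lnum (monic_eval cs (x : KK k) : L) 0%N = Ev (lnum x 0%N) ds.
Proof.
move=> hx; elim: cs => [|c cs IH] hc.
  by split; [by []|exists [::]].
have [hc0 [d hd]] : R c by apply: hc; left.
have [h1 [ds h2]] := IH (fun c' h => hc c' (or_intror h)).
rewrite me_cons; split.
  by apply: V_add => //; apply: V_mul.
exists (d :: ds); rewrite lnum_add0 //; last by apply: V_mul.
by rewrite lnum_mul0 // hd h2.
Qed.

Lemma int_closed : integrally_closed R.
Proof.
move=> x [cs [hcs heq]].
case: (posnP (lden (x : L))) => hx.
  have [h1 [ds h2]] := small_case hx hcs.
  move: h2; rewrite heq => h2.
  have [c hc] := alg_closed (esym h2).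
  by split; [exact: hx|exists c].
have := big_case hx (fun c h => R_V (hcs c h)).
rewrite heq; have -> : lnum (rzero (KK k)) 0%N = 0 by []. by rewrite eqxx.
Qed.

End Int.


Theorem mainTheorem13 (k : fieldType) :
  integrally_closed (RR k) /\
  ~ finite_t_basic_property (RR k) /\
  eqsetK (II k) (Rspan (RR k) (YY k :: laur_mul (XX k) (YY k) :: nil)) /\
  is_ideal (RR k) (II k) /\ is_ideal (RR k) (JJ k) /\ subsetK (JJ k) (II k) /\
  eqsetK (tcl (RR k) (prodI (JJ k) (II k))) (tcl (RR k) (prodI (II k) (II k))) /\
  eqsetK (tcl (RR k) (JJ k)) (JJ k) /\
  ~ eqsetK (JJ k) (MM k) /\
  eqsetK (tcl (RR k) (II k)) (MM k).
Proof.
split; first exact: int_closed.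
split; first exact: notFTB.
split; first exact: II_Rspan.
split; first exact: II_ideal.
split; first exact: JJ_ideal.
split; first exact: JJ_II.
split; first exact: tJI.
split; first exact: tJ.
split; first exact: notJM.
exact: tI.
Qed.
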